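(* Let $s_0\in(0,1)$ and let $\varphi:[0,\infty)\to(0,\infty)$ be a deterministic (measurable) function with $\int_0^\infty\varphi(s)\,ds<\infty$. Let $(P_t)_{t\ge0}$ be a stochastic process with almost surely continuous, positive sample paths such that $\sup_{t\ge0}\mathbb{E}[P_t]\le M<\infty$ for some constant $M$. Set $\beta_t=\varphi(t)P_t$ and let $(S_t)_{t\ge0}$ be the solution of $$\frac{dS_t}{dt}=-\beta_t S_t(1-S_t),\qquad S_0=s_0,$$ namely $S_t=\left[1+\left(\frac{1}{s_0}-1\right)\exp\left(\int_0^t\beta_r\,dr\right)\right]^{-1}$. Then the limit $S_\infty=\lim_{t\to\infty}S_t$ satisfies $S_\infty\in(0,s_0)$ almost surely.
   Context: This is an SI epidemic model with population normalized to one; $S_t$ is the susceptible fraction, $\varphi$ models a public health intervention and $P_t$ the random transmission rate in the absence of intervention. The intervention is called successful when $\int_0^\infty\varphi(s)\,ds<\infty$. *)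

(* Defs.v *)
From HB Require Import structures.
From mathcomp Require Import all_boot all_order all_algebra.
From mathcomp Require Import all_classical all_reals all_analysis.
Set Implicit Arguments. Unset Strict Implicit. Unset Printing Implicit Defensive.
Import Order.TTheory GRing.Theory Num.Theory.
Local Open Scope classical_set_scope.
Local Open Scope ring_scope.

(* Susceptible fraction, given by the explicit solution of the logistic ODE
   dS/dt = - beta_t S (1 - S), S_0 = s0, with beta_r = phi r * P r w:
   S_t(w) = [1 + (1/s0 - 1) exp(int_0^t beta_r dr)]^-1 . *)
Definition SI_S {R : realType} {Omega : Type} (s0 : R) (phi : R -> R)
  (P : R -> Omega -> R) (t : R) (w : Omega) : R :=
  (1 + (s0^-1 - 1) *
     expR (Rintegral (@lebesgue_measure R) `[0%R, t] (fun r => phi r * P r w)))^-1.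

(* Main.v *)
Require Import Defs.
From HB Require Import structures.
From mathcomp Require Import all_boot all_order all_algebra.
From mathcomp Require Import all_classical all_reals all_analysis.
From mathcomp Require Import measurable_realfun.
Import Order.TTheory GRing.Theory Num.Theory numFieldNormedType.Exports.
Import Num.Def.
Local Open Scope classical_set_scope.
Local Open Scope ring_scope.

Section Step.
Context {R : realType}.
Definition ak (k j : nat) : R := j%:R / k.+1%:R.
Definition Ik (k j : nat) : set R := `[ak k j, ak k j.+1[.
Definition Nk (k : nat) := (k * k.+1)%N.
Definition stepf (k : nat) (x : nat -> R) (r : R) : R :=
  \sum_(j < Nk k) (\1_(Ik k j) r) * x j.

Lemma Ik_mem k j r : (Ik k j r) <-> (j%:R <= r * k.+1%:R < j.+1%:R).
Proof.
rewrite /Ik /ak /= in_itv /=.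
have k0 : (0:R) < k.+1%:R by rewrite ltr0n.
by rewrite !ler_pdivrMr // !ltr_pdivlMr // ?ler_pdivlMr.
Qed.

Lemma step_eq k x r : 0 <= r ->
  stepf k x r = if r < k%:R then x (Num.truncn (r * k.+1%:R)) else 0.
Proof.
move=> r0; have k0 : (0:R) < k.+1%:R by rewrite ltr0n.
have rk0 : 0 <= r * k.+1%:R by rewrite mulr_ge0 // ltW.
rewrite /stepf; case: ifPn => rk.
  have j0N : (Num.truncn (r * k.+1%:R) < Nk k)%N.
    by rewrite truncn_lt_nat // /Nk natrM ltr_pM2r.
  rewrite (bigD1 (Ordinal j0N)) //= big1 ?addr0.
    rewrite indicE mem_set ?mul1r //; apply/Ik_mem; exact: truncn_itv.
  move=> j /eqP jne; rewrite indicE memNset ?mul0r //.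
  move/Ik_mem => /truncn_def hj; apply: jne; apply: val_inj => /=; by rewrite hj.
rewrite big1 // => j _; rewrite indicE memNset ?mul0r //.
move/Ik_mem => /andP[_ h]; move: rk; rewrite -leNgt => kr.
have : (j.+1%:R : R) <= k%:R * k.+1%:R.
  by rewrite -natrM ler_nat; exact: (ltn_ord j).
move=> h2; have := lt_le_trans h h2.
by rewrite ltr_pM2r // ltNge kr.
Qed.
End Step.

Section EinfHelpers.
Context {R : realType}.
Local Open Scope ereal_scope.

Lemma limn_einf_le_cst (u : (\bar R)^nat) c : (forall n, u n <= c) -> limn_einf u <= c.
Proof.
move=> h; rewrite limn_einf_lim; apply: lime_le; first exact: is_cvg_einfs.
apply: nearW => n /=; apply: (le_trans _ (h n)); apply: ereal_inf_lbound.
by exists n => //=.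
Qed.

Lemma le_limn_einf (u v : (\bar R)^nat) : (forall n, u n <= v n) ->
  limn_einf u <= limn_einf v.
Proof.
move=> h; rewrite !limn_einf_lim; apply: lee_lim; [exact: is_cvg_einfs|exact: is_cvg_einfs|].
apply: nearW => n /=; apply: le_ereal_inf_tmp => _ [k /= nk <-].
apply: le_trans (h k); apply: ereal_inf_lbound; by exists k.
Qed.

Lemma limn_einf_ge0 (u : (\bar R)^nat) : (forall n, 0 <= u n) -> 0 <= limn_einf u.
Proof.
move=> h; rewrite limn_einf_lim; apply: lime_ge; first exact: is_cvg_einfs.
apply: nearW => n /=; apply: le_ereal_inf_tmp => _ [k /= nk <-]; exact: h.
Qed.

End EinfHelpers.

Section Main.
Context {R : realType} {d : measure_display} {Omega : measurableType d}
  (Pr : probability Omega R) (phi : R -> R) (P : R -> Omega -> R) (M : R).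
Local Notation A0 := ([set` `[(0:R), +oo[] : set R).
Local Notation leb := (@lebesgue_measure R).

Context (phi0 : forall t, 0 <= t -> 0 < phi t) (mphi : measurable_fun A0 phi).

Definition Pp t w := Num.max (P t w) 0.
Definition fk k r w := stepf k (fun j => Pp (ak k j) w) r.
Definition Fk k w := (\int[leb]_(r in A0) (phi r * fk k r w)%:E)%E.
Definition Ck k j := (\int[leb]_(r in A0) (phi r * \1_(Ik k j) r)%:E)%E.

Lemma mA0 : measurable A0. Proof. exact: measurable_itv. Qed.

Lemma mCk_int k j : measurable_fun A0 (fun r : R => ((phi r * \1_(Ik k j) r)%:E : \bar R)).
Proof.
apply/measurable_EFinP; apply: measurable_funM => //.
apply: measurable_indic; exact: measurable_itv.
Qed.

Lemma Ck_int0 k j (r : R) : A0 r -> (0 <= (phi r * \1_(Ik k j) r)%:E)%E.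
Proof.
rewrite /= in_itv /= andbT => r0; rewrite lee_fin mulr_ge0 //.
  exact/ltW/phi0.
Qed.

Lemma Ck_ge0 k j : (0 <= Ck k j)%E.
Proof. apply: integral_ge0 => r; exact: Ck_int0. Qed.

Lemma Fk_sum k w : Fk k w = (\sum_(j < Nk k) Ck k j * (Pp (ak k j) w)%:E)%E.
Proof.
rewrite /Fk /Ck.
under eq_integral => r _.
  rewrite /fk /stepf mulr_sumr -sumEFin.
  under eq_bigr => j _ do rewrite mulrA EFinM.
  over.
rewrite /= ge0_integral_sum //.
- apply: eq_bigr => j _; rewrite ge0_integralZr //.
  + exact: mCk_int.
  + exact: Ck_int0.
  + by rewrite lee_fin /Pp le_max lexx orbT.
- move=> j; apply: emeasurable_funM; first exact: mCk_int.
  exact: measurable_cst.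
- move=> j r A0r; apply: mule_ge0; first exact: Ck_int0.
  by rewrite lee_fin /Pp le_max lexx orbT.
Qed.

Lemma sum_Ck_le k :
  (\sum_(j < Nk k) Ck k j <= \int[leb]_(r in A0) (phi r)%:E)%E.
Proof.
rewrite /Ck -ge0_integral_sum //.
- apply: ge0_le_integral => //.
  + by move=> r A0r; apply: sume_ge0 => j _; exact: Ck_int0.
  + by apply: emeasurable_sum => j; exact: mCk_int.
  + exact/measurable_EFinP.
  move=> r; rewrite /= in_itv /= andbT => r0.
  rewrite sumEFin lee_fin -mulr_sumr.
  have -> : \sum_(i < Nk k) \1_(Ik k i) r = stepf k (fun _ => 1) r.
    by rewrite /stepf; apply: eq_bigr => j _; rewrite mulr1.
  rewrite step_eq //; case: ifP => _; rewrite ?mulr1 ?mulr0 //.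
  exact/ltW/phi0.
- exact: mCk_int.
- by move=> j r; exact: Ck_int0.
Qed.

Context (mP : forall t, 0 <= t -> measurable_fun setT (P t)).
Context (aepos : {ae Pr, forall w, forall t, 0 <= t -> 0 < P t w}).
Context (EP : forall t, 0 <= t -> (\int[Pr]_w (P t w)%:E <= M%:E)%E).

Lemma ak_ge0 k j : 0 <= ak (R:=R) k j.
Proof. by rewrite /ak divr_ge0. Qed.

Lemma mPp t : 0 <= t -> measurable_fun setT (Pp t).
Proof. move=> t0; apply: measurable_maxr => //; exact: mP. Qed.

Lemma Pp_ge0 t w : 0 <= Pp t w.
Proof. by rewrite /Pp le_max lexx orbT. Qed.

Lemma mFk k : measurable_fun setT (Fk k).
Proof.
rewrite (_ : Fk k = fun w => (\sum_(j < Nk k) Ck k j * (Pp (ak k j) w)%:E)%E).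
  apply: emeasurable_sum => j; apply: emeasurable_funM; first exact: measurable_cst.
  apply/measurable_EFinP; apply: mPp; exact: ak_ge0.
by apply/funext => w; rewrite Fk_sum.
Qed.

Lemma EPp t : 0 <= t -> (\int[Pr]_w (Pp t w)%:E <= M%:E)%E.
Proof.
move=> t0; rewrite (ae_eq_integral (fun w => (P t w)%:E)) //.
- exact: EP.
- by apply/measurable_EFinP; exact: mPp.
- by apply/measurable_EFinP; exact: mP.
apply: filterS aepos => w h _; congr (_%:E).
by rewrite /Pp max_l // ltW // h.
Qed.

Lemma M_ge0 : 0 <= M.
Proof.
rewrite -lee_fin; have := EPp 0 (lexx (0:R)); apply: le_trans.
apply: integral_ge0 => w _; rewrite lee_fin; exact: Pp_ge0.
Qed.

Lemma EFk k : (\int[Pr]_w Fk k w <= (\int[leb]_(r in A0) (phi r)%:E) * M%:E)%E.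
Proof.
under eq_integral do rewrite Fk_sum.
rewrite ge0_integral_sum //.
- apply: le_trans (lee_wpmul2r _ (sum_Ck_le k)); last by rewrite lee_fin M_ge0.
  rewrite ge0_sume_distrl; last by move=> j _; exact: Ck_ge0.
  apply: lee_sum => j _; rewrite ge0_integralZl //.
  + apply: lee_wpmul2l; first exact: Ck_ge0.
    apply: EPp; exact: ak_ge0.
  + by apply/measurable_EFinP; apply: mPp; exact: ak_ge0.
  + by move=> w _; rewrite lee_fin; exact: Pp_ge0.
  + exact: Ck_ge0.
- move=> j; apply: emeasurable_funM; first exact: measurable_cst.
  apply/measurable_EFinP; apply: mPp; exact: ak_ge0.
- move=> j w _; apply: mule_ge0; first exact: Ck_ge0.
  rewrite lee_fin; exact: Pp_ge0.
Qed.

Context (iphi : leb.-integrable A0 (EFin \o phi)).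

Definition G w := limn_einf (fun k => Fk k w).

Lemma Fk_ge0 k w : (0 <= Fk k w)%E.
Proof.
apply: integral_ge0 => r; rewrite /= in_itv /= andbT => r0.
rewrite lee_fin mulr_ge0 //; first exact/ltW/phi0.
rewrite /fk step_eq //; case: ifP => _ //; exact: Pp_ge0.
Qed.

Lemma mG : measurable_fun setT G.
Proof.
rewrite (_ : G = fun w => - limn_esup (fun k => - Fk k w))%E; last first.
  apply/funext => w; rewrite -limn_einfN /G; congr limn_einf.
  by apply/funext => k /=; rewrite oppeK.
apply: measurableT_comp => //; apply: measurable_fun_limn_esup => k.
apply: measurableT_comp => //; exact: mFk.
Qed.

Lemma phi_int_fin : (\int[leb]_(r in A0) (phi r)%:E < +oo)%E.
Proof.
move/integrableP: iphi => [_]; apply: le_lt_trans.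
rewrite le_eqVlt; apply/orP; left; apply/eqP; apply: eq_integral => r.
rewrite inE /= in_itv /= andbT => r0; rewrite ger0_norm //; exact/ltW/phi0.
Qed.

Lemma G_fin : {ae Pr, forall w, G w \is a fin_num}.
Proof.
have iG : Pr.-integrable setT G.
  apply/integrableP; split; first exact: mG.
  rewrite (_ : (fun w => `|G w|) = G)%E; last first.
    apply/funext => w; rewrite gee0_abs //; apply: limn_einf_ge0 => k; exact: Fk_ge0.
  apply: (le_lt_trans (fatou _ _ _ _)) => //.
  - by move=> k; exact: mFk.
  - by move=> k w _; exact: Fk_ge0.
  apply: (@le_lt_trans _ _ ((\int[leb]_(r in A0) (phi r)%:E) * M%:E)%E).
    by apply: limn_einf_le_cst => n; exact: EFk.
  rewrite ltey_eq fin_numM //.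
  rewrite ge0_fin_numE ?phi_int_fin // integral_ge0 // => r.
  rewrite /= in_itv /= andbT => r0; rewrite lee_fin; exact/ltW/phi0.
apply: filterS (integrable_ae measurableT iG) => w; apply; done.
Qed.

Definition goodw w := {within A0, continuous (fun t => P t w)} /\
  (forall t, 0 <= t -> 0 < P t w).

Lemma ak_trunc_cvg (r : R) : 0 <= r ->
  (fun k => ak k (truncn (r * k.+1%:R))) @ \oo --> r.
Proof.
move=> r0.
apply: (@squeeze_cvgr _ _ _ _ (fun k => r - harmonic k) (fun _ => r)).
- apply: nearW => k /=.
  have k0 : (0:R) < k.+1%:R by rewrite ltr0n.
  have rk0 : 0 <= r * k.+1%:R by rewrite mulr_ge0 // ltW.
  have /andP[h1 h2] := truncn_itv rk0.
  rewrite /ak; apply/andP; split.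
    rewrite ler_pdivlMr // mulrBl mulVf ?lt0r_neq0 // lerBlDr.
    by rewrite natr1; exact: (ltW h2).
  by rewrite ler_pdivrMr.
- rewrite -[X in _ --> X]subr0; apply: cvgB; first exact: cvg_cst.
  exact: cvg_harmonic.
- exact: cvg_cst.
Qed.

Lemma fk_cvg w r : goodw w -> 0 <= r -> (fun k => fk k r w) @ \oo --> P r w.
Proof.
move=> [cw pw] r0.
pose a := fun k => ak (R:=R) k (truncn (r * k.+1%:R)).
have a0 k : A0 (a k) by rewrite /= in_itv /= andbT; exact: ak_ge0.
have Hc : (fun t => P t w) @ within A0 (nbhs r) --> P r w.
  apply: (proj1 (subspace_continuousP _ _) cw).
  by rewrite /= in_itv /= andbT.
have aw : a @ \oo --> within A0 (nbhs r).
  move=> U hU; have h := ak_trunc_cvg r r0 _ hU.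
  case: h => i _ hi; exists i => // k ik; apply: (hi k ik); exact: a0.
have HPa : (fun k => P (a k) w) @ \oo --> P r w.
  exact: (cvg_trans (cvg_app _ aw) Hc).
apply: cvg_trans HPa; apply: near_eq_cvg.
near=> k; rewrite /fk step_eq // ifT.
  rewrite /Pp max_l //; apply: ltW; apply: pw; exact: ak_ge0.
near: k; exists (truncn r).+1 => // k /= hk.
have := real_truncnS_gt (num_real r) ; move/lt_le_trans; apply.
by rewrite ler_nat.
Unshelve. all: by end_near.
Qed.

Lemma mfk k w : measurable_fun A0 (fun r => ((phi r * fk k r w)%:E : \bar R)).
Proof.
apply/measurable_EFinP; apply: measurable_funM => //.
rewrite /fk /stepf; apply: measurable_sum => j.
apply: measurable_funM; last exact: measurable_cst.
apply: measurable_indic; exact: measurable_itv.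
Qed.

Lemma fk0 k w (r : R) : A0 r -> (0 <= ((phi r * fk k r w)%:E : \bar R))%E.
Proof.
rewrite /= in_itv /= andbT => r0; rewrite lee_fin mulr_ge0 //; first exact/ltW/phi0.
rewrite /fk step_eq //; case: ifP => _ //; exact: Pp_ge0.
Qed.

Lemma J_le w (t : R) : goodw w ->
  (\int[leb]_(r in [set` `[0%R, t]]) (phi r * P r w)%:E <= G w)%E.
Proof.
move=> gw.
have mD : measurable ([set` `[0%R, t]] : set R) by exact: measurable_itv.
have DA : ([set` `[0%R, t]] : set R) `<=` A0.
  by move=> r /=; rewrite !in_itv /= => /andP[-> _].
have -> : (\int[leb]_(r in [set` `[0%R, t]]) (phi r * P r w)%:E =
    \int[leb]_(r in [set` `[0%R, t]]) limn_einf (fun k => (phi r * fk k r w)%:E))%E.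
  apply: eq_integral.
  move=> r; rewrite inE => /DA; rewrite /= in_itv /= andbT => r0.
  have hc : (fun k => ((phi r * fk k r w)%:E : \bar R)) @ \oo --> (phi r * P r w)%:E.
    apply: cvg_EFin; first exact: nearW.
    apply: cvgMl_tmp; exact: fk_cvg.
  by rewrite is_cvg_limn_einfE; [apply/esym/cvg_lim|apply/cvg_ex; eexists; exact: hc].
apply: (le_trans (@fatou _ _ _ leb _ mD (fun k r => ((phi r * fk k r w)%:E : \bar R)) _ _)).
- by move=> k; apply: measurable_funS (mfk k w).
- by move=> k r Dr; apply: fk0; exact: DA.
apply: le_limn_einf => k.
apply: ge0_subset_integral => //.
- exact: mfk.
- by move=> r; exact: fk0.
Qed.

Lemma mPhiPw w : goodw w ->
  measurable_fun A0 (fun r => ((phi r * P r w)%:E : \bar R)).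
Proof.
move=> [cw _]; apply/measurable_EFinP; apply: measurable_funM => //.
exact: (subspace_continuous_measurable_fun mA0 cw).
Qed.

Lemma J_pos w : goodw w ->
  (0 < \int[leb]_(r in [set` `[0%R, 1%R]]) (phi r * P r w)%:E)%E.
Proof.
move=> gw; have [_ pw] := gw.
have mD : measurable ([set` `[0%R, 1%R]] : set R) by exact: measurable_itv.
have DA : ([set` `[0%R, 1%R]] : set R) `<=` A0.
  by move=> r /=; rewrite !in_itv /= => /andP[-> _].
have fpos r : [set` `[0%R, 1%R]] r -> 0 < phi r * P r w.
  move=> /DA; rewrite /= in_itv /= andbT => r0; apply: mulr_gt0; [exact: phi0|exact: pw].
have mf : measurable_fun ([set` `[0%R, 1%R]] : set R) (fun r => ((phi r * P r w)%:E : \bar R)).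
  exact: (measurable_funS mA0 DA (mPhiPw w gw)).
rewrite lt0e integral_ge0 ?andbT; last by move=> r /fpos/ltW; rewrite lee_fin.
apply/negP => /eqP h0.
have habs : (\int[leb]_(r in [set` `[0%R, 1%R]]) `|(phi r * P r w)%:E| = 0)%E.
  rewrite -h0; apply: eq_integral => r; rewrite inE => /fpos/ltW hr.
  by rewrite gee0_abs // lee_fin.
have [N [mN N0 sub]] := (ae_eq_integral_abs leb mD mf).1 habs.
have DN : ([set` `[0%R, 1%R]] : set R) `<=` N.
  move=> r Dr; apply: sub => /= /(_ Dr) /eqP; rewrite eqe.
  by rewrite gt_eqF // fpos.
have := @subset_measure0 _ _ _ leb _ _ mD mN DN N0.
move=> h.
have e1 : leb ([set` `[0%R, 1%R]] : set R) = 1%E.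
  by rewrite lebesgue_measure_itv /= lte_fin ltr01 oppr0 adde0.
have : (1%E : \bar R) = 0%E by rewrite -e1; exact: h.
by move/eqP; rewrite eqe oner_eq0.
Qed.

Lemma final_w w (s0 : R) : goodw w -> G w \is a fin_num -> 0 < s0 < 1 ->
  exists Sinf : R, SI_S s0 phi P t w @[t --> +oo] --> Sinf /\ 0 < Sinf < s0.
Proof.
move=> gw Gfin /andP[s00 s01]; have [cw pw] := gw.
pose J := fun t : R => (\int[leb]_(r in [set` `[0%R, t]]) (phi r * P r w)%:E)%E.
pose I := fun t => fine (J t).
have DA t : ([set` `[0%R, t]] : set R) `<=` A0.
  by move=> r /=; rewrite !in_itv /= => /andP[-> _].
have J0 t : (0 <= J t)%E.
  apply: integral_ge0 => r /DA; rewrite /= in_itv /= andbT => r0.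
  by rewrite lee_fin; apply: ltW; apply: mulr_gt0; [exact: phi0|exact: pw].
have Jfin t : J t \is a fin_num.
  rewrite ge0_fin_numE //; apply: le_lt_trans (J_le w t gw) _.
  by rewrite ltey_eq Gfin.
have Imono : nondecreasing_fun I.
  move=> a b ab; apply: fine_le; [exact: Jfin|exact: Jfin|].
  apply: ge0_subset_integral => //.
  - exact: (measurable_funS mA0 (DA b) (mPhiPw w gw)).
  - move=> r /DA; rewrite /= in_itv /= andbT => r0.
    by rewrite lee_fin; apply: ltW; apply: mulr_gt0; [exact: phi0|exact: pw].
  - move=> r /=; rewrite !in_itv /= => /andP[-> ra] /=.
    exact: le_trans ra ab.
have Ibnd : has_ubound (range I).
  exists (fine (G w)) => _ [t _ <-]; apply: fine_le; [exact: Jfin|exact: Gfin|].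
  exact: J_le.
have hI := nondecreasing_cvgr Imono Ibnd.
set L := sup (range I) in hI.
have I1 : 0 < I 1.
  apply: fine_gt0; apply/andP; split; first exact: J_pos.
  by rewrite ltey_eq Jfin.
have IL : I 1 <= L.
  apply: sup_upper_bound; last by exists 1.
  by split => //; exists (I 0), 0.
have L0 : 0 < L by exact: lt_le_trans I1 IL.
pose c := s0^-1 - 1.
have c0 : 0 < c by rewrite /c subr_gt0 invf_gt1.
have den0 : 0 < 1 + c * expR L by rewrite addr_gt0 // mulr_gt0 // expR_gt0.
exists (1 + c * expR L)^-1; split.
  have -> : (fun t => SI_S s0 phi P t w) = (fun t => (1 + c * expR (I t))^-1).
    by apply/funext => t.
  apply: cvgV; first by rewrite gt_eqF.
  apply: cvgD; first exact: cvg_cst.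
  apply: cvgMl_tmp.
  exact: (cvg_comp _ _ hI (@continuous_expR R L)).
apply/andP; split; first by rewrite invr_gt0.
rewrite invf_plt ?posrE //.
rewrite -[X in X < _](subrK 1) addrC ltrD2l -/c.
by rewrite ltr_pMr // expR_gt1.
Qed.

End Main.

Theorem mainTheorem2 (R : realType) (d : measure_display) (Omega : measurableType d)
  (Pr : probability Omega R) (s0 : R) (phi : R -> R) (P : R -> Omega -> R) (M : R) :
  0 < s0 < 1 ->
  (forall t, 0 <= t -> 0 < phi t) ->
  measurable_fun `[(0:R), +oo[ phi ->
  (@lebesgue_measure R).-integrable `[(0:R), +oo[ (EFin \o phi) ->
  (forall t, 0 <= t -> measurable_fun setT (P t)) ->
  {ae Pr, forall w, {within `[(0:R), +oo[, continuous (fun t => P t w)} /\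
                    (forall t, 0 <= t -> 0 < P t w)} ->
  (forall t, 0 <= t -> (\int[Pr]_w (P t w)%:E <= M%:E)%E) ->
  {ae Pr, forall w, exists Sinf : R,
     SI_S s0 phi P t w @[t --> +oo] --> Sinf /\ 0 < Sinf < s0}.
Proof.
move=> hs0 phi0 mphi iphi mP hae EP.
have aepos : {ae Pr, forall w, forall t, 0 <= t -> 0 < P t w}.
  by apply: filterS hae => w [].
have Gf := G_fin Pr phi P M phi0 mphi mP aepos EP iphi.
apply: filterS2 hae Gf => w gw Gw.
exact: final_w phi0 mphi w s0 gw Gw hs0.
Qed.
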